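(* Let $\mathcal{J}$ be a small category. If $\mathsf{pMet}$ and $\mathsf{sCpx}$ both admit limits (respectively colimits) of all $\mathcal{J}$-shaped diagrams, then so does $\mathsf{pSMT}$. If $\mathsf{Met}$ and $\mathsf{sCpx}$ both admit limits of all $\mathcal{J}$-shaped diagrams, then so does $\mathsf{SMT}$. In particular, $\mathsf{pSMT}$ admits finite products and finite coproducts, and $\mathsf{SMT}$ admits finite products.
   Context: $\mathsf{Met}$ is the category whose objects are metric spaces and whose morphisms are short (i.e. 1-Lipschitz) maps. $\mathsf{pMet}$ is the category of extended pseudo-metric spaces (distance function with values in $[0,\infty]$, symmetric, satisfying the triangle inequality, $d(x,x)=0$, but distinct points may be at distance $0$) with short maps. $\mathsf{sCpx}$ is the category of abstract simplicial complexes (a vertex set $K^0$ together with a family $K$ of nonempty finite subsets of $K^0$ containing all singletons and closed under passing to nonempty subsets) with simplicial maps (functions on vertex sets sending simplices to simplices). The category $\mathsf{SMT}$ of simplicial metric thickenings has objects the triples $(X,K,\phi)$ with $X$ a metric space, $K$ an abstract simplicial complex and $\phi\colon X\to K^0$ a bijection, and morphisms $(X,K,\phi)\to(Y,L,\psi)$ the pairs $(f,g)$ with $f\colon X\to Y$ short, $g\colon K\to L$ simplicial, and $\psi\circ f=g|_{K^0}\circ\phi$ (this is the restricted comma category of the forgetful functor $U\colon\mathsf{Met}\to\mathsf{Set}$ and the vertex-set functor $(-)^0\colon\mathsf{sCpx}\to\mathsf{Set}$, i.e. the full subcategory of the comma category on objects whose structure map is a bijection). $\mathsf{pSMT}$ is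 defined identically with $X$ allowed to be an extended pseudo-metric space. *)

(* Defs.v *)
From HB Require Import structures.
From mathcomp Require Import all_boot all_order all_algebra.
From mathcomp Require Import boolp classical_sets functions cardinality.
From mathcomp Require Import reals constructive_ereal Rstruct.
From Stdlib Require Import ProofIrrelevance.

Set Implicit Arguments.
Unset Strict Implicit.
Unset Printing Implicit Defensive.
Import Order.TTheory GRing.Theory Num.Theory.
Local Open Scope classical_set_scope.

Record Category := {
  ob :> Type;
  hom : ob -> ob -> Type;
  idm : forall a, hom a a;
  comp : forall a b c, hom b c -> hom a b -> hom a c;
  comp_idl : forall a b (f : hom a b), comp (idm b) f = f;
  comp_idr : forall a b (f : hom a b), comp f (idm a) = f;
  comp_assoc : forall a b c d (f : hom a b) (g : hom b c) (h : hom c d),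
      comp h (comp g f) = comp (comp h g) f
}.
Arguments hom {C} a b : rename.
Arguments idm {C} a : rename.
Arguments comp {C a b c} g f : rename.

(* Small categories: a separate record, so that its universe of objects
   and morphisms is independent of (smaller than) that of the categories
   of spaces. These are the index shapes J. *)
Record SmallCat := {
  sob :> Type;
  shom : sob -> sob -> Type;
  sidm : forall i, shom i i;
  scomp : forall i j k, shom j k -> shom i j -> shom i k;
  scomp_idl : forall i j (u : shom i j), scomp (sidm j) u = u;
  scomp_idr : forall i j (u : shom i j), scomp u (sidm i) = u;
  scomp_assoc : forall i j k l (u : shom i j) (v : shom j k) (w : shom k l),
      scomp w (scomp v u) = scomp (scomp w v) u
}.
Arguments shom {J} i j : rename.
Arguments sidm {J} i : rename.
Arguments scomp {J i j k} v u : rename.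

Record Diagram (J : SmallCat) (C : Category) := {
  dob :> J -> C;
  dmap : forall i j, shom i j -> hom (dob i) (dob j);
  dmap_id : forall i, dmap (sidm i) = idm (dob i);
  dmap_comp : forall i j k (u : shom i j) (v : shom j k),
      dmap (scomp v u) = comp (dmap v) (dmap u)
}.
Arguments dmap {J C} F {i j} u : rename.

Section Limits.
Variables (J : SmallCat) (C : Category) (F : Diagram J C).

Definition is_cone (c : C) (leg : forall j, hom c (F j)) : Prop :=
  forall i j (u : shom i j), comp (dmap F u) (leg i) = leg j.

Definition is_cocone (c : C) (leg : forall j, hom (F j) c) : Prop :=
  forall i j (u : shom i j), comp (leg j) (dmap F u) = leg i.

Definition is_limit (c : C) (leg : forall j, hom c (F j)) : Prop :=
  is_cone leg /\
  forall (d : C) (leg' : forall j, hom d (F j)), is_cone leg' ->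
    exists! h : hom d c, forall j, comp (leg j) h = leg' j.

Definition is_colimit (c : C) (leg : forall j, hom (F j) c) : Prop :=
  is_cocone leg /\
  forall (d : C) (leg' : forall j, hom (F j) d), is_cocone leg' ->
    exists! h : hom c d, forall j, comp h (leg j) = leg' j.

Definition has_limit : Prop :=
  exists (c : C) (leg : forall j, hom c (F j)), is_limit leg.
Definition has_colimit : Prop :=
  exists (c : C) (leg : forall j, hom (F j) c), is_colimit leg.
End Limits.

Definition has_limits_of_shape (J : SmallCat) (C : Category) : Prop :=
  forall F : Diagram J C, has_limit F.
Definition has_colimits_of_shape (J : SmallCat) (C : Category) : Prop :=
  forall F : Diagram J C, has_colimit F.

(* The discrete category on {0,...,n-1}; finite (co)products are
   (co)limits of diagrams of these shapes, for every n (n = 0 gives the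
   terminal / initial object). *)
Definition discrete_cat (n : nat) : SmallCat.
Proof.
refine {| sob := 'I_n; shom := fun i j => i = j;
          sidm := fun i => erefl i;
          scomp := fun i j k v u => etrans u v |}.
all: move=> *; exact: eq_irrelevance.
Defined.

Definition has_finite_products (C : Category) : Prop :=
  forall n, has_limits_of_shape (discrete_cat n) C.
Definition has_finite_coproducts (C : Category) : Prop :=
  forall n, has_colimits_of_shape (discrete_cat n) C.

Section SubCat.
Variables (O : Type) (H : O -> O -> Type) (hid : forall a, H a a)
  (hcomp : forall a b c, H b c -> H a b -> H a c)
  (hidl : forall a b (f : H a b), hcomp (hid b) f = f)
  (hidr : forall a b (f : H a b), hcomp f (hid a) = f)
  (hassoc : forall a b c d (f : H a b) (g : H b c) (h : H c d),
      hcomp h (hcomp g f) = hcomp (hcomp h g) f)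
  (P : forall a b, H a b -> Prop)
  (Pid : forall a, P (hid a))
  (Pcomp : forall a b c (g : H b c) (f : H a b), P g -> P f -> P (hcomp g f)).

Definition subcat : Category.
Proof.
refine {| ob := O; hom := fun a b => {f : H a b | P f};
          idm := fun a => exist _ (hid a) (Pid a);
          comp := fun a b c g f =>
            exist _ (hcomp (proj1_sig g) (proj1_sig f))
              (Pcomp (proj2_sig g) (proj2_sig f)) |}.
- move=> a b [f pf] /=; apply: eq_exist_uncurried; exists (hidl f).
  exact: proof_irrelevance.
- move=> a b [f pf] /=; apply: eq_exist_uncurried; exists (hidr f).
  exact: proof_irrelevance.
- move=> a b c d [f pf] [g pg] [h ph] /=; apply: eq_exist_uncurried.
  exists (hassoc f g h); exact: proof_irrelevance.
Defined.
End SubCat.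

Local Open Scope ereal_scope.
Notation R := Rdefinitions.R.

Record pmet := {
  pcarrier :> Type;
  dist : pcarrier -> pcarrier -> \bar R;
  dist_ge0 : forall x y, 0 <= dist x y;
  dist_self : forall x, dist x x = 0;
  dist_sym : forall x y, dist x y = dist y x;
  dist_tri : forall x y z, dist x z <= dist x y + dist y z
}.

Definition is_metric (X : pmet) : Prop :=
  (forall x y : X, dist x y \is a fin_num) /\
  (forall x y : X, dist x y = 0 -> x = y).

Definition short (X Y : pmet) (f : X -> Y) : Prop :=
  forall x x', dist (f x) (f x') <= dist x x'.

Lemma short_id (X : pmet) : short (fun x : X => x).
Proof. by move=> x x'. Qed.

Lemma short_comp (X Y Z : pmet) (g : Y -> Z) (f : X -> Y) :
  short g -> short f -> short (fun x => g (f x)).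
Proof. by move=> sg sf x x'; apply: le_trans (sg _ _) (sf _ _). Qed.

Definition pMet : Category :=
  @subcat pmet (fun X Y => X -> Y) (fun X x => x) (fun X Y Z g f x => g (f x))
    (fun _ _ _ => erefl) (fun _ _ _ => erefl) (fun _ _ _ _ _ _ _ => erefl)
    (fun X Y f => short f) short_id (fun X Y Z g f => @short_comp X Y Z g f).

Record met := { mspace :> pmet; mspace_metric : is_metric mspace }.

Definition Met : Category :=
  @subcat met (fun X Y : met => X -> Y) (fun (X : met) (x : X) => x)
    (fun (X Y Z : met) (g : Y -> Z) (f : X -> Y) x => g (f x))
    (fun _ _ _ => erefl) (fun _ _ _ => erefl) (fun _ _ _ _ _ _ _ => erefl)
    (fun X Y f => short f) (fun X : met => @short_id X)
    (fun X Y Z g f => @short_comp X Y Z g f).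
Local Close Scope ereal_scope.

Record scpx := {
  vertices :> Type;
  simplex : set (set vertices);
  simplex_nonempty : forall s, simplex s -> s !=set0;
  simplex_finite : forall s, simplex s -> finite_set s;
  simplex_single : forall v, simplex [set v];
  simplex_sub : forall s t, simplex s -> t `<=` s -> t !=set0 -> simplex t
}.

Definition simplicial (K L : scpx) (g : K -> L) : Prop :=
  forall s, simplex s -> simplex (g @` s).

Lemma simplicial_id (K : scpx) : simplicial (fun v : K => v).
Proof. by move=> s Ks; rewrite image_id. Qed.

Lemma simplicial_comp (K L M : scpx) (g : L -> M) (f : K -> L) :
  simplicial g -> simplicial f -> simplicial (fun v => g (f v)).
Proof. by move=> sg sf s Ks; rewrite -(image_comp f g); apply/sg/sf. Qed.

Definition sCpx : Category :=
  @subcat scpx (fun K L => K -> L) (fun K v => v) (fun K L M g f v => g (f v))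
    (fun _ _ _ => erefl) (fun _ _ _ => erefl) (fun _ _ _ _ _ _ _ => erefl)
    (fun K L g => simplicial g) simplicial_id
    (fun K L M g f => @simplicial_comp K L M g f).

Record psmt := {
  pt_space : pmet;
  pt_cpx : scpx;
  pt_phi : pt_space -> pt_cpx;
  pt_phi_bij : bijective pt_phi
}.

Definition psmt_mor (A B : psmt) (fg : (pt_space A -> pt_space B) *
                                       (pt_cpx A -> pt_cpx B)) : Prop :=
  [/\ short fg.1, simplicial fg.2 &
      forall x, @pt_phi B (fg.1 x) = fg.2 (@pt_phi A x)].

Lemma psmt_mor_id (A : psmt) : psmt_mor (A := A) (B := A) (id, id).
Proof. by split; [exact: short_id | exact: simplicial_id | ]. Qed.

Lemma psmt_mor_comp (A B C : psmt) gg ff :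
  psmt_mor (A := B) (B := C) gg -> psmt_mor (A := A) (B := B) ff ->
  psmt_mor (A := A) (B := C) (gg.1 \o ff.1, gg.2 \o ff.2).
Proof.
case=> sg1 sg2 cg [sf1 sf2 cf]; split.
- exact: short_comp.
- exact: simplicial_comp.
- by move=> x /=; rewrite cg cf.
Qed.

Lemma pair_idl (A B : psmt)
  (f : (pt_space A -> pt_space B) * (pt_cpx A -> pt_cpx B)) :
  (id \o f.1, id \o f.2) = f.
Proof. by case: f. Qed.

Lemma pair_idr (A B : psmt)
  (f : (pt_space A -> pt_space B) * (pt_cpx A -> pt_cpx B)) :
  (f.1 \o id, f.2 \o id) = f.
Proof. by case: f. Qed.

Definition pSMT : Category :=
  @subcat psmt
    (fun A B => ((pt_space A -> pt_space B) * (pt_cpx A -> pt_cpx B))%type)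
    (fun A => (id, id))
    (fun A B C gg ff => (gg.1 \o ff.1, gg.2 \o ff.2))
    pair_idl pair_idr
    (fun _ _ _ _ f g h => erefl)
    psmt_mor psmt_mor_id psmt_mor_comp.

Record smt := { smt_psmt :> psmt; smt_metric : is_metric (pt_space smt_psmt) }.

Definition SMT : Category :=
  @subcat smt
    (fun A B => ((pt_space A -> pt_space B) * (pt_cpx A -> pt_cpx B))%type)
    (fun A => (id, id))
    (fun A B C gg ff => (gg.1 \o ff.1, gg.2 \o ff.2))
    (fun A B : smt => @pair_idl A B) (fun A B : smt => @pair_idr A B)
    (fun _ _ _ _ f g h => erefl)
    (fun A B => @psmt_mor A B) (fun A : smt => @psmt_mor_id A)
    (fun A B C => @psmt_mor_comp A B C).

(* Main.v *)
Require Import Defs.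
From HB Require Import structures.
From mathcomp Require Import all_boot all_order all_algebra.
From mathcomp Require Import boolp classical_sets functions cardinality.
From mathcomp Require Import reals constructive_ereal Rstruct.
From Stdlib Require Import ProofIrrelevance.
Set Implicit Arguments.
Unset Strict Implicit.
Unset Printing Implicit Defensive.
Import Order.TTheory GRing.Theory Num.Theory.
Import Defs.
Local Open Scope classical_set_scope.

Section Sub1S.


Lemma sig_eq (A : Type) (P : A -> Prop) (f g : {x | P x}) :
  proj1_sig f = proj1_sig g -> f = g.
Proof.
case: f g => [f pf] [g pg] /= efg; subst g; congr exist; exact: proof_irrelevance.
Qed.

Local Open Scope ereal_scope.
Definition ipmet (T : Type) : pmet.
refine {| pcarrier := T; dist := fun _ _ => 0 |}.
all: by move=> *; rewrite ?adde0.
Defined.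
Local Close Scope ereal_scope.

Definition iscpx (T : Type) : scpx.
refine {| vertices := T; simplex := fun s => s !=set0 /\ finite_set s |}.
- by move=> s [].
- by move=> s [].
- move=> v; split; [by exists v | exact: finite_set1].
- move=> s t [_ fs] ts t0; split => //; exact: sub_finite_set fs.
Defined.

Lemma ipmet_metric : is_metric (ipmet unit).
Proof. by split => // [[] []]. Qed.
Definition pt_met : met := {| mspace := ipmet unit; mspace_metric := ipmet_metric |}.

Lemma short_to_i (X : pmet) (T : Type) (f : X -> ipmet T) : short f.
Proof. by move=> x y; exact: dist_ge0. Qed.

Lemma short_const (X Y : pmet) (c : Y) : short (fun _ : X => c).
Proof. by move=> x y; rewrite dist_self; exact: dist_ge0. Qed.

Lemma image_const_nonempty (A B : Type) (s : set A) (c : B) :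
  s !=set0 -> (fun _ => c) @` s = [set c].
Proof.
move=> [a sa]; apply/seteqP; split => y /=; first by case=> x _ <-.
by move=> ->; exists a.
Qed.

Lemma simplicial_const (K L : scpx) (c : L) : simplicial (fun _ : K => c).
Proof.
move=> s Ks; rewrite image_const_nonempty; [exact: simplex_single|].
exact: simplex_nonempty.
Qed.

Lemma simplicial_to_i (K : scpx) (T : Type) (f : K -> iscpx T) : simplicial f.
Proof.
move=> s Ks; split; first by case: (simplex_nonempty Ks) => x sx; exists (f x).
exact/finite_image/simplex_finite.
Qed.

End Sub1S.

Section Sub2S.


Section LimPts.
Variables (J : SmallCat).

Lemma pMet_lim_pts (F : Diagram J pMet) (L : pMet) (leg : forall j, hom L (F j)) :
  is_limit leg ->
  (forall x y : L, (forall j, proj1_sig (leg j) x = proj1_sig (leg j) y) -> x = y) /\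
  (forall p : forall j, F j,
     (forall i j (u : shom i j), proj1_sig (dmap F u) (p i) = p j) ->
     exists x : L, forall j, proj1_sig (leg j) x = p j).
Proof.
move=> [cone univ]; split.
- move=> x y exy.
  pose d : pMet := ipmet unit.
  pose leg' j : hom d (F j) := exist _ (fun _ => proj1_sig (leg j) x) (short_const _).
  have cl : is_cone leg'.
    move=> i j u; apply: sig_eq; apply: funext => t /=.
    by rewrite -(cone i j u).
  have [h [hl hu]] := univ d leg' cl.
  have ex : h = exist _ (fun _ : d => x) (short_const _) :> hom d L.
    by apply: hu => j; apply: sig_eq.
  have ey : h = exist _ (fun _ : d => y) (short_const _) :> hom d L.
    by apply: hu => j; apply: sig_eq; apply: funext => t /=; rewrite exy.
  by have := congr1 (fun f : hom d L => proj1_sig f tt) (etrans (esym ex) ey).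
- move=> p pc.
  pose d : pMet := ipmet unit.
  pose leg' j : hom d (F j) := exist _ (fun _ => p j) (short_const _).
  have cl : is_cone leg'.
    by move=> i j u; apply: sig_eq; apply: funext => t /=; rewrite pc.
  have [h [hl hu]] := univ d leg' cl.
  exists (proj1_sig h tt) => j.
  by have := congr1 (fun f : hom d (F j) => proj1_sig f tt) (hl j).
Qed.

Lemma Met_lim_pts (F : Diagram J Met) (L : Met) (leg : forall j, hom L (F j)) :
  is_limit leg ->
  (forall x y : L, (forall j, proj1_sig (leg j) x = proj1_sig (leg j) y) -> x = y) /\
  (forall p : forall j, F j,
     (forall i j (u : shom i j), proj1_sig (dmap F u) (p i) = p j) ->
     exists x : L, forall j, proj1_sig (leg j) x = p j).
Proof.
move=> [cone univ]; split.
- move=> x y exy.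
  pose d : Met := pt_met.
  pose leg' j : hom d (F j) := exist _ (fun _ => proj1_sig (leg j) x) (short_const _).
  have cl : is_cone leg'.
    move=> i j u; apply: sig_eq; apply: funext => t /=.
    by rewrite -(cone i j u).
  have [h [hl hu]] := univ d leg' cl.
  have ex : h = exist _ (fun _ : d => x) (short_const _) :> hom d L.
    by apply: hu => j; apply: sig_eq.
  have ey : h = exist _ (fun _ : d => y) (short_const _) :> hom d L.
    by apply: hu => j; apply: sig_eq; apply: funext => t /=; rewrite exy.
  by have := congr1 (fun f : hom d L => proj1_sig f tt) (etrans (esym ex) ey).
- move=> p pc.
  pose d : Met := pt_met.
  pose leg' j : hom d (F j) := exist _ (fun _ => p j) (short_const _).
  have cl : is_cone leg'.
    by move=> i j u; apply: sig_eq; apply: funext => t /=; rewrite pc.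
  have [h [hl hu]] := univ d leg' cl.
  exists (proj1_sig h tt) => j.
  by have := congr1 (fun f : hom d (F j) => proj1_sig f tt) (hl j).
Qed.

Lemma sCpx_lim_pts (F : Diagram J sCpx) (L : sCpx) (leg : forall j, hom L (F j)) :
  is_limit leg ->
  (forall x y : L, (forall j, proj1_sig (leg j) x = proj1_sig (leg j) y) -> x = y) /\
  (forall p : forall j, F j,
     (forall i j (u : shom i j), proj1_sig (dmap F u) (p i) = p j) ->
     exists x : L, forall j, proj1_sig (leg j) x = p j).
Proof.
move=> [cone univ]; split.
- move=> x y exy.
  pose d : sCpx := iscpx unit.
  pose leg' j : hom d (F j) := exist _ (fun _ => proj1_sig (leg j) x) (simplicial_const _).
  have cl : is_cone leg'.
    move=> i j u; apply: sig_eq; apply: funext => t /=.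
    by rewrite -(cone i j u).
  have [h [hl hu]] := univ d leg' cl.
  have ex : h = exist _ (fun _ : d => x) (simplicial_const _) :> hom d L.
    by apply: hu => j; apply: sig_eq.
  have ey : h = exist _ (fun _ : d => y) (simplicial_const _) :> hom d L.
    by apply: hu => j; apply: sig_eq; apply: funext => t /=; rewrite exy.
  by have := congr1 (fun f : hom d L => proj1_sig f tt) (etrans (esym ex) ey).
- move=> p pc.
  pose d : sCpx := iscpx unit.
  pose leg' j : hom d (F j) := exist _ (fun _ => p j) (simplicial_const _).
  have cl : is_cone leg'.
    by move=> i j u; apply: sig_eq; apply: funext => t /=; rewrite pc.
  have [h [hl hu]] := univ d leg' cl.
  exists (proj1_sig h tt) => j.
  by have := congr1 (fun f : hom d (F j) => proj1_sig f tt) (hl j).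
Qed.

Lemma pMet_colim_maps (F : Diagram J pMet) (C : pMet) (leg : forall j, hom (F j) C) :
  is_colimit leg -> forall T : Type,
  (forall h1 h2 : C -> T, (forall j x, h1 (proj1_sig (leg j) x) = h2 (proj1_sig (leg j) x)) -> h1 = h2) /\
  (forall s : forall j, F j -> T,
     (forall i j (u : shom i j) x, s j (proj1_sig (dmap F u) x) = s i x) ->
     exists h : C -> T, forall j x, h (proj1_sig (leg j) x) = s j x).
Proof.
move=> [cone univ] T; split.
- move=> h1 h2 eh.
  pose d : pMet := ipmet T.
  pose leg' j : hom (F j) d := exist _ (fun x => h1 (proj1_sig (leg j) x)) (short_to_i _).
  have cl : is_cocone leg'.
    move=> i j u; apply: sig_eq; apply: funext => t /=.
    by rewrite -(cone i j u).
  have [h [hl hu]] := univ d leg' cl.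
  have e1 : h = exist _ (h1 : C -> d) (short_to_i _) :> hom C d.
    by apply: hu => j; apply: sig_eq.
  have e2 : h = exist _ (h2 : C -> d) (short_to_i _) :> hom C d.
    by apply: hu => j; apply: sig_eq; apply: funext => t /=; rewrite eh.
  by have := congr1 (fun f : hom C d => proj1_sig f) (etrans (esym e1) e2).
- move=> s sc.
  pose d : pMet := ipmet T.
  pose leg' j : hom (F j) d := exist _ (s j : F j -> d) (short_to_i _).
  have cl : is_cocone leg'.
    by move=> i j u; apply: sig_eq; apply: funext => t /=; rewrite sc.
  have [h [hl hu]] := univ d leg' cl.
  exists (proj1_sig h) => j x.
  by have := congr1 (fun f : hom (F j) d => proj1_sig f x) (hl j).
Qed.

Lemma sCpx_colim_maps (F : Diagram J sCpx) (C : sCpx) (leg : forall j, hom (F j) C) :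
  is_colimit leg -> forall T : Type,
  (forall h1 h2 : C -> T, (forall j x, h1 (proj1_sig (leg j) x) = h2 (proj1_sig (leg j) x)) -> h1 = h2) /\
  (forall s : forall j, F j -> T,
     (forall i j (u : shom i j) x, s j (proj1_sig (dmap F u) x) = s i x) ->
     exists h : C -> T, forall j x, h (proj1_sig (leg j) x) = s j x).
Proof.
move=> [cone univ] T; split.
- move=> h1 h2 eh.
  pose d : sCpx := iscpx T.
  pose leg' j : hom (F j) d := exist _ (fun x => h1 (proj1_sig (leg j) x)) (simplicial_to_i _).
  have cl : is_cocone leg'.
    move=> i j u; apply: sig_eq; apply: funext => t /=.
    by rewrite -(cone i j u).
  have [h [hl hu]] := univ d leg' cl.
  have e1 : h = exist _ (h1 : C -> d) (simplicial_to_i _) :> hom C d.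
    by apply: hu => j; apply: sig_eq.
  have e2 : h = exist _ (h2 : C -> d) (simplicial_to_i _) :> hom C d.
    by apply: hu => j; apply: sig_eq; apply: funext => t /=; rewrite eh.
  by have := congr1 (fun f : hom C d => proj1_sig f) (etrans (esym e1) e2).
- move=> s sc.
  pose d : sCpx := iscpx T.
  pose leg' j : hom (F j) d := exist _ (s j : F j -> d) (simplicial_to_i _).
  have cl : is_cocone leg'.
    by move=> i j u; apply: sig_eq; apply: funext => t /=; rewrite sc.
  have [h [hl hu]] := univ d leg' cl.
  exists (proj1_sig h) => j x.
  by have := congr1 (fun f : hom (F j) d => proj1_sig f x) (hl j).
Qed.
End LimPts.

End Sub2S.

Section Sub3S.


Lemma phi_surj (A : psmt) (v : pt_cpx A) : exists x, @pt_phi A x = v.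
Proof. by case: (pt_phi_bij A) => g _ gK; exists (g v). Qed.
Definition phinv (A : psmt) (v : pt_cpx A) : pt_space A :=
  proj1_sig (cid (phi_surj v)).
Lemma phinvK (A : psmt) (v : pt_cpx A) : @pt_phi A (phinv v) = v.
Proof. by rewrite /phinv; case: cid. Qed.
Lemma phi_inj (A : psmt) : injective (@pt_phi A).
Proof. exact: bij_inj (pt_phi_bij A). Qed.

Section Proj.
Variables (J : SmallCat) (F : Diagram J pSMT).

Definition dX : Diagram J pMet.
refine (@Build_Diagram J pMet (fun j => pt_space (F j))
          (fun i j u => exist _ (proj1_sig (dmap F u)).1 (let: And3 a _ _ := proj2_sig (dmap F u) in a)) _ _).
- by move=> i; apply: sig_eq => /=; rewrite dmap_id.
- by move=> i j k u v; apply: sig_eq => /=; rewrite dmap_comp.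
Defined.

Definition dK : Diagram J sCpx.
refine (@Build_Diagram J sCpx (fun j => pt_cpx (F j))
          (fun i j u => exist _ (proj1_sig (dmap F u)).2 (let: And3 _ a _ := proj2_sig (dmap F u) in a)) _ _).
- by move=> i; apply: sig_eq => /=; rewrite dmap_id.
- by move=> i j k u v; apply: sig_eq => /=; rewrite dmap_comp.
Defined.

Lemma natF i j (u : shom i j) x :
  @pt_phi (F j) ((proj1_sig (dmap F u)).1 x) = (proj1_sig (dmap F u)).2 (@pt_phi (F i) x).
Proof. by case: (proj2_sig (dmap F u)). Qed.

Lemma pSMT_lim_gen : has_limit dX -> has_limit dK -> has_limit F.
Proof.
case=> LX [legX limX] [LK [legK limK]].
have [injX surjX] := pMet_lim_pts limX.
have [injK surjK] := sCpx_lim_pts limK.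
have coneX i j (u : shom i j) x :
    (proj1_sig (dmap F u)).1 (proj1_sig (legX i) x) = proj1_sig (legX j) x.
  by have := congr1 (fun f => proj1_sig f x) (proj1 limX i j u).
have coneK i j (u : shom i j) x :
    (proj1_sig (dmap F u)).2 (proj1_sig (legK i) x) = proj1_sig (legK j) x.
  by have := congr1 (fun f => proj1_sig f x) (proj1 limK i j u).
have hPhi : forall x : LX, exists y : LK,
    forall j, proj1_sig (legK j) y = @pt_phi (F j) (proj1_sig (legX j) x).
  move=> x; apply: surjK => i j u /=.
  by rewrite -natF coneX.
have [Phi HPhi] := choice hPhi.
have hPsi : forall y : LK, exists x : LX,
    forall j, proj1_sig (legX j) x = phinv (proj1_sig (legK j) y).
  move=> y; apply: surjX => i j u /=.
  apply: (@phi_inj (F j)); rewrite natF !phinvK; exact: coneK.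
have [Psi HPsi] := choice hPsi.
have bij : bijective Phi.
  exists Psi.
  - move=> x; apply: injX => j.
    apply: (@phi_inj (F j)); by rewrite HPsi phinvK HPhi.
  - move=> y; apply: injK => j.
    by rewrite HPhi HPsi phinvK.
pose L : psmt := {| pt_space := LX; pt_cpx := LK; pt_phi := Phi; pt_phi_bij := bij |}.
have legP j : psmt_mor (A := L) (B := F j) (proj1_sig (legX j), proj1_sig (legK j)).
  split => /=; [exact: (proj2_sig (legX j)) | exact: (proj2_sig (legK j)) |].
  by move=> x; rewrite HPhi.
pose leg j : hom (L : pSMT) (F j) := exist _ _ (legP j).
exists (L : pSMT), leg; split.
  move=> i j u; apply: sig_eq => /=.
  by congr pair; apply: funext => x /=; [rewrite coneX | rewrite coneK].
move=> d leg' cone'.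
pose lX j : hom (pt_space d : pMet) (dX j) :=
  exist _ (proj1_sig (leg' j)).1 (let: And3 a _ _ := proj2_sig (leg' j) in a).
pose lK j : hom (pt_cpx d : sCpx) (dK j) :=
  exist _ (proj1_sig (leg' j)).2 (let: And3 _ a _ := proj2_sig (leg' j) in a).
have clX : is_cone lX.
  move=> i j u; apply: sig_eq => /=.
  by have := congr1 (fun f => (proj1_sig f).1) (cone' i j u).
have clK : is_cone lK.
  move=> i j u; apply: sig_eq => /=.
  by have := congr1 (fun f => (proj1_sig f).2) (cone' i j u).
have [hX [hXl hXu]] := proj2 limX _ _ clX.
have [hK [hKl hKu]] := proj2 limK _ _ clK.
have hXl' j x : proj1_sig (legX j) (proj1_sig hX x) = (proj1_sig (leg' j)).1 x.
  by have := congr1 (fun f => proj1_sig f x) (hXl j).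
have hKl' j x : proj1_sig (legK j) (proj1_sig hK x) = (proj1_sig (leg' j)).2 x.
  by have := congr1 (fun f => proj1_sig f x) (hKl j).
have hP : psmt_mor (A := d) (B := L) (proj1_sig hX, proj1_sig hK).
  split => /=; [exact: (proj2_sig hX) | exact: (proj2_sig hK) |].
  move=> x; apply: injK => j.
  rewrite HPhi hXl' hKl'.
  by case: (proj2_sig (leg' j)).
exists (exist _ _ hP); split.
  move=> j; apply: sig_eq => /=.
  case E : (proj1_sig (leg' j)) => [a b].
  by congr pair; apply: funext => x /=; [rewrite hXl' E | rewrite hKl' E].
move=> h' h'l.
have [h'1 h'2 h'3] := proj2_sig h'.
have eX : hX = exist _ _ h'1.
  apply: hXu => j; apply: sig_eq => /=.
  by have := congr1 (fun f => (proj1_sig f).1) (h'l j).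
have eK : hK = exist _ _ h'2.
  apply: hKu => j; apply: sig_eq => /=.
  by have := congr1 (fun f => (proj1_sig f).2) (h'l j).
apply: sig_eq => /=; rewrite eX eK /=.
by case: (proj1_sig h').
Qed.
End Proj.

End Sub3S.

Section Sub4S.


Lemma pinv_phi (A : psmt) (x : pt_space A) : phinv (@pt_phi A x) = x.
Proof. by apply: (@phi_inj A); rewrite phinvK. Qed.

Section Colim.
Variables (J : SmallCat) (F : Diagram J pSMT).

Lemma pSMT_colim_gen : has_colimit (dX F) -> has_colimit (dK F) -> has_colimit F.
Proof.
case=> CX [legX colX] [CK [legK colK]].
have coneX i j (u : shom i j) x :
    proj1_sig (legX j) ((proj1_sig (dmap F u)).1 x) = proj1_sig (legX i) x.
  by have := congr1 (fun f => proj1_sig f x) (proj1 colX i j u).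
have coneK i j (u : shom i j) x :
    proj1_sig (legK j) ((proj1_sig (dmap F u)).2 x) = proj1_sig (legK i) x.
  by have := congr1 (fun f => proj1_sig f x) (proj1 colK i j u).
have [Phi HPhi] : exists Phi : CX -> CK, forall j x,
    Phi (proj1_sig (legX j) x) = proj1_sig (legK j) (@pt_phi (F j) x).
  apply: (proj2 (pMet_colim_maps colX CK)) => i j u x /=.
  by rewrite natF coneK.
have [Psi HPsi] : exists Psi : CK -> CX, forall j v,
    Psi (proj1_sig (legK j) v) = proj1_sig (legX j) (phinv v).
  apply: (proj2 (sCpx_colim_maps colK CX)) => i j u v /=.
  by rewrite -[v]phinvK -natF !pinv_phi coneX.
have bij : bijective Phi.
  exists Psi.
  - move=> x; have := (proj1 (pMet_colim_maps colX CX)) (fun x => Psi (Phi x)) id.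
    move=> /(_ _)/(congr1 (@^~ x)); apply => j y /=.
    by rewrite HPhi HPsi pinv_phi.
  - move=> y; have := (proj1 (sCpx_colim_maps colK CK)) (fun y => Phi (Psi y)) id.
    move=> /(_ _)/(congr1 (@^~ y)); apply => j v /=.
    by rewrite HPsi HPhi phinvK.
pose L : psmt := {| pt_space := CX; pt_cpx := CK; pt_phi := Phi; pt_phi_bij := bij |}.
have legP j : psmt_mor (A := F j) (B := L) (proj1_sig (legX j), proj1_sig (legK j)).
  split => /=; [exact: (proj2_sig (legX j)) | exact: (proj2_sig (legK j)) |].
  by move=> x; rewrite HPhi.
pose leg j : hom (F j) (L : pSMT) := exist _ _ (legP j).
exists (L : pSMT), leg; split.
  move=> i j u; apply: sig_eq => /=.
  by congr pair; apply: funext => x /=; [rewrite coneX | rewrite coneK].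
move=> d leg' cone'.
pose lX j : hom (dX F j) (pt_space d : pMet) :=
  exist _ (proj1_sig (leg' j)).1 (let: And3 a _ _ := proj2_sig (leg' j) in a).
pose lK j : hom (dK F j) (pt_cpx d : sCpx) :=
  exist _ (proj1_sig (leg' j)).2 (let: And3 _ a _ := proj2_sig (leg' j) in a).
have clX : is_cocone lX.
  move=> i j u; apply: sig_eq => /=.
  by have := congr1 (fun f => (proj1_sig f).1) (cone' i j u).
have clK : is_cocone lK.
  move=> i j u; apply: sig_eq => /=.
  by have := congr1 (fun f => (proj1_sig f).2) (cone' i j u).
have [hX [hXl hXu]] := proj2 colX _ _ clX.
have [hK [hKl hKu]] := proj2 colK _ _ clK.
have hXl' j x : proj1_sig hX (proj1_sig (legX j) x) = (proj1_sig (leg' j)).1 x.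
  by have := congr1 (fun f => proj1_sig f x) (hXl j).
have hKl' j x : proj1_sig hK (proj1_sig (legK j) x) = (proj1_sig (leg' j)).2 x.
  by have := congr1 (fun f => proj1_sig f x) (hKl j).
have hP : psmt_mor (A := L) (B := d) (proj1_sig hX, proj1_sig hK).
  split => /=; [exact: (proj2_sig hX) | exact: (proj2_sig hK) |].
  move=> x.
  have := (proj1 (pMet_colim_maps colX (pt_cpx d)))
     (fun x => @pt_phi d (proj1_sig hX x)) (fun x => proj1_sig hK (Phi x)).
  move=> /(_ _)/(congr1 (@^~ x)); apply => j y /=.
  rewrite hXl' HPhi hKl'.
  by case: (proj2_sig (leg' j)).
exists (exist _ _ hP); split.
  move=> j; apply: sig_eq => /=.
  case E : (proj1_sig (leg' j)) => [a b].
  by congr pair; apply: funext => x /=; [rewrite hXl' E | rewrite hKl' E].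
move=> h' h'l.
have [h'1 h'2 h'3] := proj2_sig h'.
have eX : hX = exist _ _ h'1.
  apply: hXu => j; apply: sig_eq => /=.
  by have := congr1 (fun f => (proj1_sig f).1) (h'l j).
have eK : hK = exist _ _ h'2.
  apply: hKu => j; apply: sig_eq => /=.
  by have := congr1 (fun f => (proj1_sig f).2) (h'l j).
apply: sig_eq => /=; rewrite eX eK /=.
by case: (proj1_sig h').
Qed.
End Colim.

End Sub4S.

Section Sub5S.


Section ProjM.
Variables (J : SmallCat) (F : Diagram J SMT).

Definition dXm : Diagram J Met.
refine (@Build_Diagram J Met (fun j => {| mspace := pt_space (F j); mspace_metric := smt_metric (F j) |})
          (fun i j u => exist _ (proj1_sig (dmap F u)).1 (let: And3 a _ _ := proj2_sig (dmap F u) in a)) _ _).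
- by move=> i; apply: sig_eq => /=; rewrite dmap_id.
- by move=> i j k u v; apply: sig_eq => /=; rewrite dmap_comp.
Defined.

Definition dKm : Diagram J sCpx.
refine (@Build_Diagram J sCpx (fun j => pt_cpx (F j))
          (fun i j u => exist _ (proj1_sig (dmap F u)).2 (let: And3 _ a _ := proj2_sig (dmap F u) in a)) _ _).
- by move=> i; apply: sig_eq => /=; rewrite dmap_id.
- by move=> i j k u v; apply: sig_eq => /=; rewrite dmap_comp.
Defined.

Lemma natFm i j (u : shom i j) x :
  @pt_phi (F j) ((proj1_sig (dmap F u)).1 x) = (proj1_sig (dmap F u)).2 (@pt_phi (F i) x).
Proof. by case: (proj2_sig (dmap F u)). Qed.

Lemma SMT_lim_gen : has_limit dXm -> has_limit dKm -> has_limit F.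
Proof.
case=> LX [legX limX] [LK [legK limK]].
have [injX surjX] := Met_lim_pts limX.
have [injK surjK] := sCpx_lim_pts limK.
have coneX i j (u : shom i j) x :
    (proj1_sig (dmap F u)).1 (proj1_sig (legX i) x) = proj1_sig (legX j) x.
  by have := congr1 (fun f => proj1_sig f x) (proj1 limX i j u).
have coneK i j (u : shom i j) x :
    (proj1_sig (dmap F u)).2 (proj1_sig (legK i) x) = proj1_sig (legK j) x.
  by have := congr1 (fun f => proj1_sig f x) (proj1 limK i j u).
have hPhi : forall x : LX, exists y : LK,
    forall j, proj1_sig (legK j) y = @pt_phi (F j) (proj1_sig (legX j) x).
  move=> x; apply: surjK => i j u /=.
  by rewrite -natFm coneX.
have [Phi HPhi] := choice hPhi.
have hPsi : forall y : LK, exists x : LX,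
    forall j, proj1_sig (legX j) x = phinv (proj1_sig (legK j) y).
  move=> y; apply: surjX => i j u /=.
  apply: (@phi_inj (F j)); rewrite natFm !phinvK; exact: coneK.
have [Psi HPsi] := choice hPsi.
have bij : bijective Phi.
  exists Psi.
  - move=> x; apply: injX => j.
    apply: (@phi_inj (F j)); by rewrite HPsi phinvK HPhi.
  - move=> y; apply: injK => j.
    by rewrite HPhi HPsi phinvK.
pose L0 : psmt := {| pt_space := LX; pt_cpx := LK; pt_phi := Phi; pt_phi_bij := bij |}.
pose L : smt := {| smt_psmt := L0; smt_metric := mspace_metric LX |}.
have legP j : psmt_mor (A := L) (B := F j) (proj1_sig (legX j), proj1_sig (legK j)).
  split => /=; [exact: (proj2_sig (legX j)) | exact: (proj2_sig (legK j)) |].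
  by move=> x; rewrite HPhi.
pose leg j : hom (L : SMT) (F j) := exist _ _ (legP j).
exists (L : SMT), leg; split.
  move=> i j u; apply: sig_eq => /=.
  by congr pair; apply: funext => x /=; [rewrite coneX | rewrite coneK].
move=> d leg' cone'.
pose lX j : hom ({| mspace := pt_space d; mspace_metric := smt_metric d |} : Met) (dXm j) :=
  exist _ (proj1_sig (leg' j)).1 (let: And3 a _ _ := proj2_sig (leg' j) in a).
pose lK j : hom (pt_cpx d : sCpx) (dKm j) :=
  exist _ (proj1_sig (leg' j)).2 (let: And3 _ a _ := proj2_sig (leg' j) in a).
have clX : is_cone lX.
  move=> i j u; apply: sig_eq => /=.
  by have := congr1 (fun f => (proj1_sig f).1) (cone' i j u).
have clK : is_cone lK.
  move=> i j u; apply: sig_eq => /=.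
  by have := congr1 (fun f => (proj1_sig f).2) (cone' i j u).
have [hX [hXl hXu]] := proj2 limX _ _ clX.
have [hK [hKl hKu]] := proj2 limK _ _ clK.
have hXl' j x : proj1_sig (legX j) (proj1_sig hX x) = (proj1_sig (leg' j)).1 x.
  by have := congr1 (fun f => proj1_sig f x) (hXl j).
have hKl' j x : proj1_sig (legK j) (proj1_sig hK x) = (proj1_sig (leg' j)).2 x.
  by have := congr1 (fun f => proj1_sig f x) (hKl j).
have hP : psmt_mor (A := d) (B := L) (proj1_sig hX, proj1_sig hK).
  split => /=; [exact: (proj2_sig hX) | exact: (proj2_sig hK) |].
  move=> x; apply: injK => j.
  rewrite HPhi hXl' hKl'.
  by case: (proj2_sig (leg' j)).
exists (exist _ _ hP); split.
  move=> j; apply: sig_eq => /=.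
  case E : (proj1_sig (leg' j)) => [a b].
  by congr pair; apply: funext => x /=; [rewrite hXl' E | rewrite hKl' E].
move=> h' h'l.
have [h'1 h'2 h'3] := proj2_sig h'.
have eX : hX = exist _ _ h'1.
  apply: hXu => j; apply: sig_eq => /=.
  by have := congr1 (fun f => (proj1_sig f).1) (h'l j).
have eK : hK = exist _ _ h'2.
  apply: hKu => j; apply: sig_eq => /=.
  by have := congr1 (fun f => (proj1_sig f).2) (h'l j).
apply: sig_eq => /=; rewrite eX eK /=.
by case: (proj1_sig h').
Qed.
End ProjM.

End Sub5S.

Section Sub6S.


Lemma disc_cone n (C : Category) (F : Diagram (discrete_cat n) C) (c : C)
  (leg : forall j, hom c (F j)) : is_cone leg.
Proof.
move=> i j u; change (i = j) in u; case: j / u.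
by rewrite (dmap_id F i) comp_idl.
Qed.

Lemma disc_cocone n (C : Category) (F : Diagram (discrete_cat n) C) (c : C)
  (leg : forall j, hom (F j) c) : is_cocone leg.
Proof.
move=> i j u; change (i = j) in u; case: j / u.
by rewrite (dmap_id F i) comp_idr.
Qed.

Local Open Scope ereal_scope.

Section ProdMet.
Variables (n : nat) (X : 'I_n -> pmet).

Definition pdist (x y : forall i, X i) : \bar R :=
  \big[Order.max/0]_(i < n) dist (x i) (y i).

Lemma pdist_ge (x y : forall i, X i) i : dist (x i) (y i) <= pdist x y.
Proof. exact: le_bigmax. Qed.

Lemma pdist_le (x y : forall i, X i) c :
  0 <= c -> (forall i, dist (x i) (y i) <= c) -> pdist x y <= c.
Proof. by move=> c0 h; apply: bigmax_le. Qed.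

Definition prod_pmet : pmet.
refine {| pcarrier := forall i, X i; dist := pdist |}.
- by move=> x y; apply: bigmax_ge_id.
- move=> x; apply: le_anti; rewrite bigmax_ge_id andbT.
  by apply: pdist_le => // i; rewrite dist_self.
- by move=> x y; rewrite /pdist; apply: eq_bigr => i _; rewrite dist_sym.
- move=> x y z; apply: pdist_le.
    by apply: adde_ge0; apply: bigmax_ge_id.
  move=> i; apply: le_trans (dist_tri _ (y i) _) _.
  by apply: leeD; apply: pdist_ge.
Defined.

Lemma prod_metric : (forall i, is_metric (X i)) -> is_metric prod_pmet.
Proof.
move=> hm; split.
- move=> x y /=; rewrite /pdist; elim/big_ind: _ => //.
    by move=> a b fa fb; rewrite maxElt; case: ifP.
  by move=> i _; case: (hm i) => + _; apply.
- move=> x y /= e; apply: functional_extensionality_dep => i.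
  case: (hm i) => _; apply; apply: le_anti; rewrite dist_ge0 andbT.
  by rewrite -e; apply: pdist_ge.
Qed.
End ProdMet.

Lemma pMet_disc_lim n : has_limits_of_shape (discrete_cat n) pMet.
Proof.
move=> F.
pose P := prod_pmet (fun i : 'I_n => (F i : pmet)).
have ps j : short (X := P) (Y := F j) (fun x : P => x j).
  by move=> x y; exact: pdist_ge.
pose leg j : hom (P : pMet) (F j) := exist _ _ (ps j).
exists (P : pMet), leg; split; first exact: disc_cone.
move=> d leg' _.
have hs : short (fun x : d => (fun i => proj1_sig (leg' i) x) : P).
  move=> x y; apply: pdist_le; first exact: dist_ge0.
  by move=> i; exact: (proj2_sig (leg' i)).
exists (exist _ _ hs); split.
  by move=> j; apply: sig_eq.
move=> h' hl; apply: sig_eq; apply: funext => x /=.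
apply: functional_extensionality_dep => i.
by rewrite -(hl i).
Qed.

Lemma Met_disc_lim n : has_limits_of_shape (discrete_cat n) Met.
Proof.
move=> F.
pose P0 := prod_pmet (fun i : 'I_n => (F i : pmet)).
pose P : met := {| mspace := P0; mspace_metric := prod_metric (fun i => mspace_metric (F i)) |}.
have ps j : short (X := P) (Y := F j) (fun x : P => x j).
  by move=> x y; exact: pdist_ge.
pose leg j : hom (P : Met) (F j) := exist _ _ (ps j).
exists (P : Met), leg; split; first exact: disc_cone.
move=> d leg' _.
have hs : short (fun x : d => (fun i => proj1_sig (leg' i) x) : P).
  move=> x y; apply: pdist_le; first exact: dist_ge0.
  by move=> i; exact: (proj2_sig (leg' i)).
exists (exist _ _ hs); split.
  by move=> j; apply: sig_eq.
move=> h' hl; apply: sig_eq; apply: funext => x /=.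
apply: functional_extensionality_dep => i.
by rewrite -(hl i).
Qed.

End Sub6S.

Section Sub7S.


Section ProdCpx.
Variables (n : nat) (K : 'I_n -> scpx).

Definition prod_cpx : scpx.
refine {| vertices := forall i, K i;
          simplex := fun s => [/\ s !=set0, finite_set s &
                                forall i, simplex ((fun v => v i) @` s)] |}.
- by move=> s [].
- by move=> s [].
- move=> v; split; [by exists v | exact: finite_set1 |].
  by move=> i; rewrite image_set1; apply: simplex_single.
- move=> s t [s0 fs hs] ts t0; split => //; first exact: sub_finite_set fs.
  move=> i; apply: (simplex_sub (hs i)); first exact: image_subset.
  by case: t0 => v tv; exists (v i), v.
Defined.
End ProdCpx.

Lemma sCpx_disc_lim n : has_limits_of_shape (discrete_cat n) sCpx.
Proof.
move=> F.
pose P := prod_cpx (fun i : 'I_n => (F i : scpx)).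
have ps j : simplicial (K := P) (L := F j) (fun x : P => x j).
  by move=> s [].
pose leg j : hom (P : sCpx) (F j) := exist _ _ (ps j).
exists (P : sCpx), leg; split; first exact: disc_cone.
move=> d leg' _.
have hs : simplicial (K := d) (L := P) (fun x : d => (fun i => proj1_sig (leg' i) x) : P).
  move=> s ds; split.
  - by case: (simplex_nonempty ds) => x sx; exists (fun i => proj1_sig (leg' i) x), x.
  - exact/finite_image/simplex_finite.
  - move=> i; rewrite image_comp; exact: (proj2_sig (leg' i)).
exists (exist _ _ hs); split.
  by move=> j; apply: sig_eq.
move=> h' hl; apply: sig_eq; apply: funext => x /=.
apply: functional_extensionality_dep => i.
by rewrite -(hl i).
Qed.

Section CoprodCpx.
Variables (n : nat) (K : 'I_n -> scpx).
Local Notation T := {i : 'I_n & K i}.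

Definition coprod_cpx : scpx.
refine {| vertices := T;
          simplex := fun s => exists i (t : set (K i)), simplex t /\ s = Tagged K @` t |}.
- move=> s [i [t [kt ->]]]; case: (simplex_nonempty kt) => x tx.
  by exists (Tagged K x), x.
- move=> s [i [t [kt ->]]]; exact/finite_image/simplex_finite.
- move=> [i x]; exists i, [set x]; split; first exact: simplex_single.
  by rewrite image_set1.
- move=> s t [i [u [ku ->]]] tsub t0.
  exists i, [set x | t (Tagged K x)]; split.
    apply: (simplex_sub ku).
      move=> x /= tx; case: (tsub _ tx) => y uy ey; by rewrite -(eq_from_Tagged ey).
    case: t0 => v tv; case: (tsub _ tv) => y uy ey.
    by exists y; rewrite /= ey.
  apply/seteqP; split => v.
    by move=> tv; case: (tsub _ tv) => y uy ey; exists y; rewrite // /= ey.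
  by case=> y /= ty <-.
Defined.
End CoprodCpx.

Lemma sCpx_disc_colim n : has_colimits_of_shape (discrete_cat n) sCpx.
Proof.
move=> F.
pose P := coprod_cpx (fun i : 'I_n => (F i : scpx)).
have ps j : simplicial (K := F j) (L := P) (fun x => Tagged (fun i => (F i : scpx) : Type) x : P).
  by move=> s ks; exists j, s.
pose leg j : hom (F j) (P : sCpx) := exist _ _ (ps j).
exists (P : sCpx), leg; split; first exact: disc_cocone.
move=> d leg' _.
have hs : simplicial (K := P) (L := d) (fun u : P => proj1_sig (leg' (tag u)) (tagged u)).
  move=> s [i [t [kt ->]]]; rewrite image_comp /=.
  exact: (proj2_sig (leg' i)).
exists (exist _ _ hs); split.
  by move=> j; apply: sig_eq.
move=> h' hl; apply: sig_eq; apply: funext => -[i x] /=.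
by rewrite -(hl i).
Qed.

Local Open Scope ereal_scope.
Section CoprodMet.
Variables (n : nat) (X : 'I_n -> pmet).
Local Notation T := {i : 'I_n & X i}.

Definition cdist (u v : T) : \bar R :=
  if tag u == tag v then dist (tagged u) (tagged_as u v) else +oo.

Lemma cdistE i (x y : X i) : cdist (Tagged X x) (Tagged X y) = dist x y.
Proof. by rewrite /cdist eqxx tagged_asE. Qed.

Lemma cdistNE i j (x : X i) (y : X j) : i != j -> cdist (Tagged X x) (Tagged X y) = +oo.
Proof. by rewrite /cdist /= => /negbTE ->. Qed.

Lemma pinfD (a : \bar R) : 0 <= a -> +oo + a = +oo.
Proof. by case: a. Qed.
Lemma Dpinf (a : \bar R) : 0 <= a -> a + +oo = +oo.
Proof. by case: a. Qed.

Definition coprod_pmet : pmet.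
refine {| pcarrier := T; dist := cdist |}.
- move=> [i x] [j y]; case: (eqVneq i j) => [e|ne].
    by subst j; rewrite cdistE dist_ge0.
  by rewrite cdistNE // leey.
- by move=> [i x]; rewrite cdistE dist_self.
- move=> [i x] [j y]; case: (eqVneq i j) => [e|ne].
    by subst j; rewrite !cdistE dist_sym.
  by rewrite !cdistNE // eq_sym.
- have ge0 : forall u v : T, 0 <= cdist u v.
    move=> [i x] [j y]; case: (eqVneq i j) => [e|ne].
      by subst j; rewrite cdistE dist_ge0.
    by rewrite cdistNE // leey.
  move=> [i x] [j y] [k z].
  case: (eqVneq i j) => [e|ne]; last by rewrite (cdistNE x y ne) pinfD ?leey.
  subst j; case: (eqVneq i k) => [e|ne]; last by rewrite (cdistNE y z ne) Dpinf ?leey.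
  by subst k; rewrite !cdistE dist_tri.
Defined.
End CoprodMet.

Lemma pMet_disc_colim n : has_colimits_of_shape (discrete_cat n) pMet.
Proof.
move=> F.
pose P := coprod_pmet (fun i : 'I_n => (F i : pmet)).
have ps j : short (X := F j) (Y := P) (fun x => Tagged (fun i => (F i : pmet) : Type) x : P).
  by move=> x y /=; rewrite cdistE.
pose leg j : hom (F j) (P : pMet) := exist _ _ (ps j).
exists (P : pMet), leg; split; first exact: disc_cocone.
move=> d leg' _.
have hs : short (X := P) (Y := d) (fun u : P => proj1_sig (leg' (tag u)) (tagged u)).
  move=> [i x] [j y] /=; case: (eqVneq i j) => [e|ne].
    by subst j; rewrite cdistE; exact: (proj2_sig (leg' i)).
  by rewrite cdistNE // leey.
exists (exist _ _ hs); split.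
  by move=> j; apply: sig_eq.
move=> h' hl; apply: sig_eq; apply: funext => -[i x] /=.
by rewrite -(hl i).
Qed.

End Sub7S.

Theorem proposition4p10 :
  (forall J : SmallCat,
      has_limits_of_shape J pMet -> has_limits_of_shape J sCpx ->
      has_limits_of_shape J pSMT) /\
  (forall J : SmallCat,
      has_colimits_of_shape J pMet -> has_colimits_of_shape J sCpx ->
      has_colimits_of_shape J pSMT) /\
  (forall J : SmallCat,
      has_limits_of_shape J Met -> has_limits_of_shape J sCpx ->
      has_limits_of_shape J SMT) /\
  has_finite_products pSMT /\ has_finite_coproducts pSMT /\
  has_finite_products SMT.
Proof.
split; [|split; [|split; [|split; [|split]]]].
- by move=> J hX hK F; apply: pSMT_lim_gen; [apply: hX | apply: hK].
- by move=> J hX hK F; apply: pSMT_colim_gen; [apply: hX | apply: hK].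
- by move=> J hX hK F; apply: SMT_lim_gen; [apply: hX | apply: hK].
- by move=> n F; apply: pSMT_lim_gen; [apply: pMet_disc_lim | apply: sCpx_disc_lim].
- by move=> n F; apply: pSMT_colim_gen; [apply: pMet_disc_colim | apply: sCpx_disc_colim].
- by move=> n F; apply: SMT_lim_gen; [apply: Met_disc_lim | apply: sCpx_disc_lim].
Qed.
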